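(* Let $\mathcal H$ be a finite-dimensional complex Hilbert space, $A$ Hermitian, $\rho$ a density operator and $|\phi\rangle$ a unit vector with $\langle\phi|\rho|\phi\rangle>0$, and define $C(\rho,A,\phi):=\big(\langle\Delta A_w\rangle^{\phi}_{\rho}\big)^2-\big(\langle\Delta A\rangle^{\phi}_{\rho}\big)^2$. Then: (i) $C(\rho,A,\phi)\ge0$; (ii) $C(\rho,A,\phi)=0$ when $\rho$ is pure; (iii) if $\mathcal H=\mathcal H_1\otimes\mathcal H_2$, $\rho=\rho_1\otimes\rho_2$, $|\phi\rangle=|\phi_1\rangle\otimes|\phi_2\rangle$ with $\langle\phi_j|\rho_j|\phi_j\rangle>0$, and $A_1,A_2$ are Hermitian on $\mathcal H_1,\mathcal H_2$ respectively, then $$C(\rho,A_1\otimes I+I\otimes A_2,\phi)=C(\rho,A_1\otimes I,\phi)+C(\rho,I\otimes A_2,\phi).$$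
   Context: For a density operator $\rho$, Hermitian $X$ and unit vector $|\phi\rangle$ with $\langle\phi|\rho|\phi\rangle>0$: $\big(\langle\Delta X\rangle^{\phi}_{\rho}\big)^2:=\operatorname{Tr}(X^2\rho)-\langle\phi|X\rho X|\phi\rangle$ and $\big(\langle\Delta X_w\rangle^{\phi}_{\rho}\big)^2:=\operatorname{Tr}(X^2\rho)-\frac{|\langle\phi|X\rho|\phi\rangle|^2}{\langle\phi|\rho|\phi\rangle}$. *)

(* Defs.v *)
From HB Require Import structures.
From mathcomp Require Import all_boot all_order all_algebra.
From mathcomp Require Import complex mxtens.
From mathcomp Require Import Rstruct.
From Stdlib Require Import Reals.
Set Implicit Arguments. Unset Strict Implicit. Unset Printing Implicit Defensive.
Import Order.TTheory GRing.Theory Num.Theory.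
Local Open Scope ring_scope.

Notation Cplx := (Rdefinitions.R)[i].

Definition adj {m n : nat} (A : 'M[Cplx]_(m, n)) : 'M[Cplx]_(n, m) :=
  (map_mx Num.conj A)^T.

Definition herm_op {n : nat} (A : 'M[Cplx]_n) : Prop := adj A = A.

Definition braket {n : nat} (u v : 'cV[Cplx]_n) : Cplx := (adj u *m v) 0 0.

Definition mel {n : nat} (u : 'cV[Cplx]_n) (X : 'M[Cplx]_n) (v : 'cV[Cplx]_n) : Cplx :=
  (adj u *m X *m v) 0 0.

Definition psd {n : nat} (A : 'M[Cplx]_n) : Prop :=
  herm_op A /\ forall x : 'cV[Cplx]_n, 0 <= mel x A x.

Definition density {n : nat} (rho : 'M[Cplx]_n) : Prop := psd rho /\ \tr rho = 1.

Definition unitvec {n : nat} (phi : 'cV[Cplx]_n) : Prop := braket phi phi = 1.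

Definition pure {n : nat} (rho : 'M[Cplx]_n) : Prop :=
  exists psi : 'cV[Cplx]_n, unitvec psi /\ rho = psi *m adj psi.

(* (<Delta X>^phi_rho)^2 := Tr(X^2 rho) - <phi|X rho X|phi>. *)
Definition dev2 {n : nat} (rho X : 'M[Cplx]_n) (phi : 'cV[Cplx]_n) : Cplx :=
  \tr (X *m X *m rho) - mel phi (X *m rho *m X) phi.

(* (<Delta X_w>^phi_rho)^2 := Tr(X^2 rho) - |<phi|X rho|phi>|^2 / <phi|rho|phi>. *)
Definition dev2w {n : nat} (rho X : 'M[Cplx]_n) (phi : 'cV[Cplx]_n) : Cplx :=
  \tr (X *m X *m rho) - (`|mel phi (X *m rho) phi| ^+ 2) / mel phi rho phi.

Definition Cgap {n : nat} (rho A : 'M[Cplx]_n) (phi : 'cV[Cplx]_n) : Cplx :=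
  dev2w rho A phi - dev2 rho A phi.

(* Kronecker/tensor product (index (i,j) |-> i * n2 + j). *)
Definition tens {m n p q : nat} (A : 'M[Cplx]_(m, n)) (B : 'M[Cplx]_(p, q))
  : 'M[Cplx]_(m * p, n * q) := tensmx A B.

(* Main.v *)
Require Import Defs.
From HB Require Import structures.
From mathcomp Require Import all_boot all_order all_algebra.
From mathcomp Require Import complex mxtens Rstruct.
From Stdlib Require Import Reals.
Import Order.TTheory GRing.Theory Num.Theory.
Local Open Scope ring_scope.

Lemma Hadj_mul m n p (A : 'M[Cplx]_(m,n)) (B : 'M[Cplx]_(n,p)) :
  adj (A *m B) = adj B *m adj A.
Proof. by rewrite /adj map_mxM trmx_mul. Qed.
Lemma HadjK m n (A : 'M[Cplx]_(m,n)) : adj (adj A) = A.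
Proof. by apply/matrixP=> i j; rewrite !mxE conjCK. Qed.
Lemma HadjD m n (A B : 'M[Cplx]_(m,n)) : adj (A + B) = adj A + adj B.
Proof. by apply/matrixP=> i j; rewrite !mxE rmorphD. Qed.
Lemma HadjB m n (A B : 'M[Cplx]_(m,n)) : adj (A - B) = adj A - adj B.
Proof. by apply/matrixP=> i j; rewrite !mxE rmorphB. Qed.
Lemma HadjZ m n a (A : 'M[Cplx]_(m,n)) : adj (a *: A) = a^* *: adj A.
Proof. by apply/matrixP=> i j; rewrite !mxE rmorphM. Qed.
Lemma Hadj1 n : adj (1%:M : 'M[Cplx]_n) = 1%:M.
Proof. by apply/matrixP=> i j; rewrite !mxE rmorphMn rmorph1 eq_sym. Qed.
Lemma Hadj_tens m n p q (A : 'M[Cplx]_(m,n)) (B : 'M[Cplx]_(p,q)) :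
  adj (tens A B) = tens (adj A) (adj B).
Proof. by rewrite /adj /tens map_mxT trmx_tens. Qed.
Lemma tens11 (X Y : 'M[Cplx]_1) : (tens X Y : 'M_(1*1)) 0 0 = X 0 0 * Y 0 0.
Proof. rewrite /tens !mxE. by rewrite !(ord1 (mxtens_unindex _).1) !(ord1 (mxtens_unindex _).2). Qed.

Lemma Hadj00 (X : 'M[Cplx]_1) : adj X 0 0 = (X 0 0)^*.
Proof. by rewrite !mxE. Qed.
Lemma mel_conj n (u v : 'cV[Cplx]_n) M : (mel u M v)^* = mel v (adj M) u.
Proof. by rewrite /mel -Hadj00 !Hadj_mul HadjK mulmxA. Qed.
Lemma mel_mull n (u v : 'cV[Cplx]_n) M A : mel u (A *m M) v = mel (adj A *m u) M v.
Proof. by rewrite /mel Hadj_mul HadjK !mulmxA. Qed.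
Lemma mel_mulr n (u v : 'cV[Cplx]_n) M A : mel u (M *m A) v = mel u M (A *m v).
Proof. by rewrite /mel !mulmxA. Qed.
Lemma mel_addl n (u1 u2 v : 'cV[Cplx]_n) M : mel (u1 + u2) M v = mel u1 M v + mel u2 M v.
Proof. by rewrite /mel HadjD !mulmxDl mxE. Qed.
Lemma mel_addr n (u v1 v2 : 'cV[Cplx]_n) M : mel u M (v1 + v2) = mel u M v1 + mel u M v2.
Proof. by rewrite /mel !mulmxDr mxE. Qed.
Lemma mel_subl n (u1 u2 v : 'cV[Cplx]_n) M : mel (u1 - u2) M v = mel u1 M v - mel u2 M v.
Proof. by rewrite /mel HadjB !mulmxBl !mxE. Qed.
Lemma mel_subr n (u v1 v2 : 'cV[Cplx]_n) M : mel u M (v1 - v2) = mel u M v1 - mel u M v2.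
Proof. by rewrite /mel !mulmxBr !mxE. Qed.
Lemma mel_scalel n a (u v : 'cV[Cplx]_n) M : mel (a *: u) M v = a^* * mel u M v.
Proof. by rewrite /mel HadjZ -!scalemxAl mxE. Qed.
Lemma mel_scaler n a (u v : 'cV[Cplx]_n) M : mel u M (a *: v) = a * mel u M v.
Proof. by rewrite /mel -!scalemxAr mxE. Qed.
Lemma mel_tens n1 n2 (u1 v1 : 'cV[Cplx]_n1) (u2 v2 : 'cV[Cplx]_n2) M1 M2 :
  mel (tens u1 u2) (tens M1 M2) (tens v1 v2) = mel u1 M1 v1 * mel u2 M2 v2.
Proof. rewrite /mel (Hadj_tens _ _ _ _ u1 u2) /tens.
change ((((adj u1 *t adj u2) : 'M_(1*1, n1*n2)) *m (M1 *t M2) *m (v1 *t v2)) (0 : 'I_(1*1)) (0 : 'I_(1*1)) = (adj u1 *m M1 *m v1) 0 0 * (adj u2 *m M2 *m v2) 0 0).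
by rewrite !tensmx_mul -tens11. Qed.
Lemma Cgap_eq n (rho A : 'M[Cplx]_n) phi : herm_op A ->
  Cgap rho A phi = mel (A *m phi) rho (A *m phi)
     - `|mel (A *m phi) rho phi| ^+ 2 / mel phi rho phi.
Proof.
move=> hA; rewrite /Cgap /dev2w /dev2 (mel_mulr _ _ _ (A *m rho) A) !mel_mull hA.
by rewrite opprB addrC addrA subrK.
Qed.
From mathcomp Require Import ring.
Lemma part1 n (rho A : 'M[Cplx]_n) (phi : 'cV[Cplx]_n) :
  density rho -> herm_op A -> 0 < mel phi rho phi -> 0 <= Cgap rho A phi.
Proof.
move=> [[hrho hpsd] _] hA hc.
rewrite Cgap_eq //.
set v := A *m phi.
set c := mel phi rho phi.
set a := mel v rho v.
set beta := mel phi rho v.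
have hb : mel v rho phi = beta^* by rewrite /beta mel_conj hrho.
have cc : c^* = c by apply: geC0_conj; apply: ltW.
have key : mel (c *: v - beta *: phi) rho (c *: v - beta *: phi) = c * (c * a - beta^* * beta).
  rewrite !mel_subl !mel_subr !mel_scalel !mel_scaler hb cc -/a -/c -/beta. ring.
have c0 : c != 0 by rewrite gt_eqF.
rewrite hb.
have -> : a - `|beta^*| ^+ 2 / c = mel (c *: v - beta *: phi) rho (c *: v - beta *: phi) / (c * c).
  rewrite key normCK conjCK. field. exact: c0.
by rewrite divr_ge0 // ?hpsd // mulr_ge0 // ltW.
Qed.
Lemma mel_pure n (psi u v : 'cV[Cplx]_n) :
  mel u (psi *m adj psi) v = (braket psi u)^* * braket psi v.
Proof.
rewrite /mel /braket mulmxA -mulmxA [in LHS]mxE big_ord1.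
by rewrite -Hadj00 Hadj_mul HadjK.
Qed.
Lemma alg2 (C : numClosedFieldType) (p q : C) : p^* * p != 0 ->
  q^* * q - `|q^* * p| ^+ 2 / (p^* * p) = 0.
Proof. move=> h; rewrite normCK !rmorphM /= conjCK. field. by move: h; rewrite mulf_eq0 negb_or /= => /andP[h1 h2]; apply/andP; split. Qed.
Lemma part2 n (rho A : 'M[Cplx]_n) (phi : 'cV[Cplx]_n) :
  pure rho -> herm_op A -> 0 < mel phi rho phi -> Cgap rho A phi = 0.
Proof.
move=> [psi [_ ->]] hA hc.
have c0 : mel phi (psi *m adj psi) phi != 0 by rewrite gt_eqF.
move: c0; rewrite Cgap_eq // !mel_pure => c0.
exact: alg2.
Qed.
Lemma herm_tens n1 n2 (A1 : 'M[Cplx]_n1) (A2 : 'M[Cplx]_n2) :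
  herm_op A1 -> herm_op A2 -> herm_op (tens A1 A2).
Proof. by rewrite /herm_op Hadj_tens => -> ->. Qed.
Lemma herm1 n : herm_op (1%:M : 'M[Cplx]_n).
Proof. exact: Hadj1. Qed.
Lemma mulB1 n1 n2 (A1 : 'M[Cplx]_n1) (phi1 : 'cV[Cplx]_n1) (phi2 : 'cV[Cplx]_n2) :
  (tens A1 1%:M *m tens phi1 phi2 : 'cV_(n1*n2)) = tens (A1 *m phi1) phi2.
Proof. rewrite /tens; change ((tensmx A1 (1%:M : 'M_n2) : 'M_(n1*n2)) *m (tensmx phi1 phi2 : 'M_(n1*n2,1*1)) = tensmx (A1 *m phi1) phi2).
by rewrite tensmx_mul mul1mx. Qed.
Lemma mulB2 n1 n2 (A2 : 'M[Cplx]_n2) (phi1 : 'cV[Cplx]_n1) (phi2 : 'cV[Cplx]_n2) :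
  (tens 1%:M A2 *m tens phi1 phi2 : 'cV_(n1*n2)) = tens phi1 (A2 *m phi2).
Proof. rewrite /tens; change ((tensmx (1%:M : 'M_n1) A2 : 'M_(n1*n2)) *m (tensmx phi1 phi2 : 'M_(n1*n2,1*1)) = tensmx phi1 (A2 *m phi2)).
by rewrite tensmx_mul mul1mx. Qed.

Lemma alg3 (C : numClosedFieldType) (a1 a2 b1 b2 c1 c2 : C) :
  c1^* = c1 -> c2^* = c2 -> c1 != 0 -> c2 != 0 ->
  a1*c2 + b1*b2^* + (b1^* * b2 + c1*a2) - `|b1*c2 + c1*b2|^+2/(c1*c2)
  = a1*c2 - `|b1*c2|^+2/(c1*c2) + (c1*a2 - `|c1*b2|^+2/(c1*c2)).
Proof.
move=> h1 h2 n1 n2; rewrite !normCK !rmorphD !rmorphM /= h1 h2.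
field. by rewrite n1 n2.
Qed.
Lemma part3 (n1 n2 : nat) (rho1 A1 : 'M[Cplx]_n1) (rho2 A2 : 'M[Cplx]_n2)
          (phi1 : 'cV[Cplx]_n1) (phi2 : 'cV[Cplx]_n2) :
      density rho1 -> density rho2 ->
      0 < mel phi1 rho1 phi1 -> 0 < mel phi2 rho2 phi2 ->
      herm_op A1 -> herm_op A2 ->
      Cgap (tens rho1 rho2) (tens A1 1%:M + tens 1%:M A2) (tens phi1 phi2)
      = Cgap (tens rho1 rho2) (tens A1 1%:M) (tens phi1 phi2)
        + Cgap (tens rho1 rho2) (tens 1%:M A2) (tens phi1 phi2).
Proof.
move=> [[hr1 _] _] [[hr2 _] _] hc1 hc2 hA1 hA2.
have hB1 := herm_tens _ _ _ _ hA1 (herm1 n2).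
have hB2 := herm_tens _ _ _ _ (herm1 n1) hA2.
have hB : herm_op (tens A1 1%:M + tens 1%:M A2) by rewrite /herm_op HadjD hB1 hB2.
rewrite !Cgap_eq // mulmxDl !mulB1 !mulB2 !mel_addl !mel_addr !mel_tens.
have e1 : mel phi1 rho1 (A1 *m phi1) = (mel (A1 *m phi1) rho1 phi1)^* by rewrite mel_conj hr1.
have e2 : mel phi2 rho2 (A2 *m phi2) = (mel (A2 *m phi2) rho2 phi2)^* by rewrite mel_conj hr2.
rewrite e1 e2; apply: alg3.
- by apply: geC0_conj; apply: ltW.
- by apply: geC0_conj; apply: ltW.
- by rewrite gt_eqF.
- by rewrite gt_eqF.
Qed.

Theorem mainTheorem9 :
  (* (i) nonnegativity *)
  (forall (n : nat) (rho A : 'M[Cplx]_n) (phi : 'cV[Cplx]_n),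
      density rho -> herm_op A -> unitvec phi -> 0 < mel phi rho phi ->
      0 <= Cgap rho A phi) /\
  (* (ii) vanishing on pure states *)
  (forall (n : nat) (rho A : 'M[Cplx]_n) (phi : 'cV[Cplx]_n),
      density rho -> pure rho -> herm_op A -> unitvec phi ->
      0 < mel phi rho phi ->
      Cgap rho A phi = 0) /\
  (* (iii) additivity on product states and local observables *)
  (forall (n1 n2 : nat) (rho1 A1 : 'M[Cplx]_n1) (rho2 A2 : 'M[Cplx]_n2)
          (phi1 : 'cV[Cplx]_n1) (phi2 : 'cV[Cplx]_n2),
      density rho1 -> density rho2 -> unitvec phi1 -> unitvec phi2 ->
      0 < mel phi1 rho1 phi1 -> 0 < mel phi2 rho2 phi2 ->
      herm_op A1 -> herm_op A2 ->
      Cgap (tens rho1 rho2) (tens A1 1%:M + tens 1%:M A2) (tens phi1 phi2)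
      = Cgap (tens rho1 rho2) (tens A1 1%:M) (tens phi1 phi2)
        + Cgap (tens rho1 rho2) (tens 1%:M A2) (tens phi1 phi2)).
Proof.
split; [|split].
- move=> n rho A phi hr hA _ hc; exact: part1.
- move=> n rho A phi _ hp hA _ hc; exact: part2.
- move=> n1 n2 rho1 A1 rho2 A2 phi1 phi2 h1 h2 _ _ hc1 hc2 hA1 hA2.
  exact: part3.
Qed.
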